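(* Let $k\ge 2$, let $H$ be a digraph (possibly with loops), and let $D$ be an $H$-colored local in-tournament. If every directed cycle in $D$ has $H$-length at most $k-2$, then $D$ has a $(k,H)$-kernel.
   Context: All digraphs are finite. A local in-tournament is a digraph $D$ such that for every vertex $x$, the subdigraph induced by the in-neighbourhood $N^-(x)$ is a tournament (every two distinct vertices joined by exactly one arc). $D$ has no loops and comes with a map $\rho: A(D)\to V(H)$. For a walk $W=(x_0,\ldots,x_n)$ in $D$, there is an obstruction on $x_i$ if $(\rho(x_{i-1},x_i),\rho(x_i,x_{i+1})) \notin A(H)$; for an open walk this is considered at internal vertices $x_i$, $1\le i\le n-1$, for a closed walk (such as a cycle) at all $i\in\{0,\ldots,n-1\}$ with indices modulo $n$. $O_H(W)$ is the set of indices with an obstruction; the $H$-length is $l_H(W)=|O_H(W)|+1$ for open $W$ and $|O_H(W)|$ for closed $W$. A $(k,H)$-kernel ($k\ge2$) is a set $S\subseteq V(D)$ such that for every two distinct $u,v\in S$ every directed $uv$-path in $D$ has $H$-length at least $k$, and for every $x\in V(D)\setminus S$ there is a directed path from $x$ to a vertex of $S$ of $H$-length at most $k-1$. *)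

(* Defs.v *)
From mathcomp Require Import all_boot.
Set Implicit Arguments. Unset Strict Implicit. Unset Printing Implicit Defensive.

(* The H-colouring
   rho : A(D) -> V(H) is given as a total function rho : V -> V -> C; only its
   values on arcs of D are ever used. *)

Section HColoured.
Variables (V C : finType) (a : rel V) (h : rel C) (rho : V -> V -> C).

Definition local_in_tournament : Prop :=
  forall x u v, a u x -> a v x -> u != v -> addb (a u v) (a v u).

Fixpoint obs_open (w : seq V) : nat :=
  match w with
  | x :: ((y :: z :: _) as t) => (~~ h (rho x y) (rho y z)) + obs_open t
  | _ => 0
  end.

Definition Hlen_open (w : seq V) : nat := obs_open w + 1.

(* H-length of a closed walk given by its vertex sequence c = (x_0,...,x_{n-1})
   (arcs x_i -> x_{i+1 mod n}); obstructions are counted at every x_i. *)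
Definition Hlen_closed (c : seq V) : nat :=
  match c with
  | [::] => 0
  | x0 :: c' => obs_open (last x0 c' :: rcons c x0)
  end.

Definition dpath (u v : V) (p : seq V) : bool :=
  [&& path a u p, last u p == v & uniq (u :: p)].

Definition dcycle (c : seq V) : bool :=
  [&& c != [::], uniq c & cycle a c].

Definition kH_kernel (k : nat) (S : {set V}) : Prop :=
  (forall u v, u \in S -> v \in S -> u != v ->
     forall p, dpath u v p -> k <= Hlen_open (u :: p)) /\
  (forall x, x \notin S ->
     exists v p, [/\ v \in S, dpath x v p & Hlen_open (x :: p) <= k - 1]).

End HColoured.

(* Main.v *)
Require Import Defs.
From mathcomp Require Import all_boot.
Set Implicit Arguments. Unset Strict Implicit. Unset Printing Implicit Defensive.

Section Cyc.
Variables (V : finType) (a : rel V).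
Hypothesis LT : local_in_tournament a.

Lemma last_in (x : V) s : s != [::] -> last x s \in s.
Proof. by case: s => //= h t _; rewrite mem_last. Qed.

Lemma mk_dcycle (x : V) s : path a x s -> last x s = x -> uniq s -> s != [::] ->
  dcycle a s.
Proof. by move=> P L U N; rewrite /dcycle N U (cycle_path x) L. Qed.

Lemma uniq_catI (s1 s2 : seq V) : uniq s1 -> uniq s2 ->
  (forall v, v \in s1 -> v \notin s2) -> uniq (s1 ++ s2).
Proof.
move=> U1 U2 D; rewrite cat_uniq U1 U2 andbT /=.
by apply/hasP => -[v vs2 vs1]; move: (D v vs1); rewrite vs2.
Qed.

Lemma rcons_nil' (s : seq V) x : rcons s x != [::].
Proof. by case: s. Qed.

Lemma ear_done (x y : V) (de e : seq V) ci :
  path a x de -> last x de = x -> uniq de ->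
  (ci == x) || (ci \in de) -> path a ci (rcons e x) ->
  uniq e -> x \notin e -> all (fun v => v \notin de) e -> y \in e ->
  exists s, [/\ dcycle a s, x \in s & y \in s].
Proof.
move=> Hp Hl Hu Hci He Ue xe De ye.
case: eqP Hci => [Ex _ | Nci /= Hci].
  subst ci; exists (rcons e x); split; last by rewrite mem_rcons in_cons ye orbT.
    apply: (mk_dcycle (x := x)) => //; first by rewrite last_rcons.
      by rewrite rcons_uniq xe Ue.
    exact: rcons_nil'.
  by rewrite mem_rcons in_cons eqxx.
case/splitPr: Hci Hp Hl Hu De => d1 d2 Hp Hl Hu De.
rewrite -cat_rcons in Hp Hl Hu De.
have xd2 : x \in d2.
  move: Hl; rewrite last_cat last_rcons.
  case: d2 {Hp Hu De} => [/= E|z d2 /= <-]; first by case: Nci.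
  by rewrite mem_last.
have xd1 : x \notin rcons d1 ci.
  move: Hu; rewrite cat_uniq => /and3P[_ H _]; apply/negP => xs.
  by move/hasP: H; apply; exists x.
exists (rcons d1 ci ++ rcons e x); split.
- apply: (mk_dcycle (x := x)).
  + rewrite cat_path last_rcons He andbT.
    by move: Hp; rewrite cat_path => /andP[].
  + by rewrite last_cat !last_rcons.
  + apply: uniq_catI.
    * by move: Hu; rewrite cat_uniq => /andP[].
    * by rewrite rcons_uniq xe Ue.
    * move=> v vd; rewrite mem_rcons in_cons negb_or; apply/andP; split.
        by apply: contra xd1 => /eqP <-.
      apply/negP => ve; move/allP: De => /(_ v ve); by rewrite mem_cat vd.
  + by case: d1 {Hp Hl Hu De xd1}.
- by rewrite mem_cat !mem_rcons !in_cons eqxx !orbT.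
- by rewrite mem_cat !mem_rcons !in_cons ye !orbT.
Qed.


Lemma ear (x y : V) n : forall (al de e : seq V) (ci : V),
  size al + size e <= n ->
  path a x (al ++ de) -> last x (al ++ de) = x -> uniq (al ++ de) ->
  (ci == x) || (ci \in al ++ de) ->
  path a ci (rcons e (last x al)) ->
  uniq e -> x \notin e -> all (fun v => v \notin al ++ de) e -> y \in e ->
  exists s, [/\ dcycle a s, x \in s & y \in s].
Proof.
elim: n => [|n IH] al de e ci.
  rewrite leqn0 addn_eq0 => /andP[_ /eqP/size0nil ->] //.
case/lastP: al => [|al0 cj].
  by move=> _ /=; apply: ear_done.
case/lastP: e => [|e0 u]; first by move=> *.
move=> Hn Hp Hl Hu Hci He Ue xe De ye.
rewrite last_rcons in He.
set w := last x al0.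
have Hpal : path a x al0 /\ a w cj.
  by move: Hp; rewrite cat_path rcons_path => /andP[/andP[-> ->]].
have Hpde : path a cj de.
  by move: Hp; rewrite cat_path last_rcons => /andP[].
have [He0 Huc] : path a ci (rcons e0 u) /\ a u cj.
  by move: He; rewrite rcons_path last_rcons => /andP[-> ->].
have uD : u \notin rcons al0 cj ++ de.
  by move/allP: De; apply; rewrite mem_rcons in_cons eqxx.
have uw : u != w.
  apply/negP => /eqP Euw.
  have : w \in x :: al0 by apply: mem_last.
  rewrite in_cons => /orP[/eqP wx | wal].
    by move: xe; rewrite Euw wx mem_rcons in_cons eqxx.
  by move: uD; rewrite Euw mem_cat mem_rcons in_cons wal !orbT.
have := LT Huc Hpal.2 uw.
case Huw: (a u w) => /= Hwu.
  apply: (IH al0 (cj :: de) (rcons e0 u) ci).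
  - by move: Hn; rewrite size_rcons addSn.
  - by rewrite -cat_rcons.
  - by rewrite -cat_rcons.
  - by rewrite -cat_rcons.
  - by rewrite -cat_rcons.
  - by rewrite rcons_path He0 last_rcons.
  - by [].
  - by [].
  - by rewrite -cat_rcons.
  - by [].
have Pn : path a x (rcons al0 u ++ cj :: de).
  by rewrite cat_path rcons_path last_rcons /= Hpal.1 Hwu Huc Hpde.
have Ln : last x (rcons al0 u ++ cj :: de) = x.
  by move: Hl; rewrite !last_cat !last_rcons.
have memn v : (v \in rcons al0 u ++ cj :: de) = (v == u) || (v \in rcons al0 cj ++ de).
  rewrite !mem_cat !mem_rcons !in_cons.
  by case: (v == u); case: (v \in al0); rewrite ?orbT ?orbF.
have Un : uniq (rcons al0 u ++ cj :: de).
  rewrite cat_rcons (perm_uniq (permEl (perm_catCA al0 [:: u] (cj :: de)))) /=.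
  by rewrite -cat_rcons uD Hu.
have Nn : rcons al0 u ++ cj :: de != [::] by rewrite -size_eq0 size_cat size_rcons.
move: Ue; rewrite rcons_uniq => /andP[ue0 Ue0].
case: (eqVneq u y) => [Euy | Nuy].
  exists (rcons al0 u ++ cj :: de); split.
  - exact: (mk_dcycle (x := x)).
  - by rewrite -{1}Ln; apply: last_in.
  - by rewrite -Euy mem_cat mem_rcons in_cons eqxx.
apply: (IH (rcons al0 u) (cj :: de) e0 ci).
- by move: Hn; rewrite !size_rcons addnS.
- exact: Pn.
- exact: Ln.
- exact: Un.
- case/orP: Hci => [H | H]; first by rewrite H.
  by rewrite memn H !orbT.
- by rewrite last_rcons.
- exact: Ue0.
- by move: xe; rewrite mem_rcons in_cons negb_or => /andP[].
- apply/allP => v ve0; rewrite memn negb_or.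
  have -> : (v == u) = false by apply/negbTE/eqP => E; move: ue0; rewrite -E ve0.
  by move/allP: De; apply; rewrite mem_rcons in_cons ve0 orbT.
- by move: ye; rewrite mem_rcons in_cons eq_sym (negbTE Nuy).
Qed.


Lemma mem_split (v : V) s : v \in s -> exists s1 s2, s = s1 ++ v :: s2.
Proof. by case/splitPr => s1 s2; exists s1, s2. Qed.

Lemma split_first (P : pred V) s : has P s ->
  exists s1 c s2, [/\ s = s1 ++ c :: s2, P c & ~~ has P s1].
Proof.
elim: s => [|h t IH] //= /orP[Ph | Ht].
  by exists [::], h, t.
case Ph: (P h); first by exists [::], h, t.
have [s1 [c [s2 [E Pc N]]]] := IH Ht.
by exists (h :: s1), c, s2; rewrite E /= Ph.
Qed.

Lemma split_last (P : pred V) s : has P s ->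
  exists s1 c s2, [/\ s = s1 ++ c :: s2, P c & ~~ has P s2].
Proof.
elim: s => [|h t IH] //= H.
case Ht: (has P t).
  have [s1 [c [s2 [E Pc N]]]] := IH Ht.
  by exists (h :: s1), c, s2; rewrite E.
by exists [::], h, t; move: H; rewrite Ht orbF.
Qed.

Lemma uniq_suffix (u1 W R : seq V) c y : u1 ++ c :: W = y :: R -> uniq R -> uniq W.
Proof.
case: u1 => [|h u1] /= [E1 E2] U.
  by rewrite E2.
by move: U; rewrite -E2 cat_uniq => /and3P[_ _ /andP[]].
Qed.

Definition cyc (x z : V) := exists s, [/\ dcycle a s, x \in s & z \in s].

Lemma rot_first (x : V) s : dcycle a s -> x \in s ->
  exists q, [/\ path a x (rcons q x), uniq (x :: q) & s =i x :: q].
Proof.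
move=> /and3P[_ Us Cs] xs.
exists (drop (index x s).+1 s ++ take (index x s) s).
rewrite -rot_index //; split.
- by move: Cs; rewrite -(rot_cycle (index x s)) rot_index.
- by rewrite rot_uniq.
- by move=> v; rewrite mem_rot.
Qed.

Lemma cyc_trans x y z : cyc x y -> cyc y z -> cyc x z.
Proof.
move=> [s1 [D1 x1 y1]] [s2 [D2 y2 z2]].
case z1: (z \in s1); first by exists s1.
have [q [Pq Uq Mq]] := rot_first D2 y2.
have zq : z \in q.
  move: z2; rewrite Mq in_cons => /orP[/eqP E|//].
  by move: z1; rewrite E y1.
have [q1 [q2 Eq]] := mem_split zq.
have [u1 [c [u2 [Eu Pc Nu]]]] := @split_last (mem s1) (y :: q1) (introT hasP (ex_intro2 _ _ y (mem_head _ _) y1)).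
have yr : y \in rcons q2 y by rewrite mem_rcons mem_head.
have [v1 [cj [v2 [Ev Pcj Nv]]]] := @split_first (mem s1) (rcons q2 y) (introT hasP (ex_intro2 _ _ y yr y1)).
set e := u2 ++ z :: v1.
have Ebig : u1 ++ c :: (rcons e cj ++ v2) = y :: rcons q y.
  rewrite Eq rcons_cat /=; have -> : y :: q1 ++ z :: rcons q2 y = (y :: q1) ++ z :: rcons q2 y by [].
  by rewrite Eu -catA /= Ev cat_rcons /e -catA.
have He : path a c (rcons e cj).
  have : sorted a (y :: rcons q y) by [].
  rewrite -Ebig => /cat_sorted2 [_] /=.
  by rewrite cat_path => /andP[].
have Ue : uniq e.
  have : uniq (rcons e cj ++ v2).
    apply: (uniq_suffix Ebig); by rewrite rcons_uniq; move: Uq => /= /andP[-> ->].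
  by rewrite cat_uniq rcons_uniq => /andP[/andP[]].
have De v : v \in e -> v \notin s1.
  rewrite /e mem_cat in_cons => /or3P[H|/eqP ->|H]; last 2 first.
  - by rewrite z1.
  - by apply/negP => vs; move/hasP: Nv; apply; exists v.
  - by apply/negP => vs; move/hasP: Nu; apply; exists v.
have ze : z \in e by rewrite /e mem_cat mem_head orbT.
have [L0 [PL UL ML]] := rot_first D1 x1.
have cjL : cj \in rcons L0 x by rewrite mem_rcons -ML.
have [al' [de EL]] := mem_split cjL.
apply: (@ear x z (size (rcons al' cj) + size e) (rcons al' cj) de e c) => //.
- by rewrite cat_rcons -EL.
- by rewrite cat_rcons -EL last_rcons.
- by rewrite cat_rcons -EL rcons_uniq.
- by rewrite cat_rcons -EL mem_rcons -ML (Pc : c \in s1) orbT.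
- by rewrite last_rcons.
- by apply/negP => /De; rewrite x1.
- by apply/allP => v /De; rewrite cat_rcons -EL mem_rcons -ML.
Qed.


Lemma cyc_arc u v : a u v -> connect a v u -> u != v -> cyc u v.
Proof.
move=> Auv /connectP [p Pp Eu] Nuv; subst u.
case/shortenP: Pp Auv Nuv => p' Pp' Up' _ Auv Nuv.
exists (v :: p'); split.
- by rewrite /dcycle Up' /= rcons_path Pp' Auv.
- exact: mem_last.
- exact: mem_head.
Qed.

Definition cyc' x y := x = y \/ cyc x y.

Lemma cyc'_trans x y z : cyc' x y -> cyc' y z -> cyc' x z.
Proof.
move=> [-> //|H1] [<-|H2]; first by right.
by right; exact: cyc_trans H1 H2.
Qed.

Lemma cyc_mutual x y : connect a x y -> connect a y x -> cyc' x y.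
Proof.
move=> /connectP [p Pp ->] {y}.
elim: p x Pp => [|h t IH] x /=; first by left.
move=> /andP[Axh Pt] C.
apply: (@cyc'_trans _ h).
  case: (eqVneq x h) => [->|Nxh]; first by left.
  right; apply: cyc_arc Nxh => //.
  apply: connect_trans C; apply/connectP; by exists t.
apply: IH => //; apply: connect_trans C _; exact: connect1.
Qed.

End Cyc.

Section Obs.
Variables (V C : finType) (h : rel C) (rho : V -> V -> C).

Lemma obs_suffix x s : obs_open h rho s <= obs_open h rho (x :: s).
Proof. by case: s => [|y [|z s]] //=; rewrite leq_addl. Qed.

Lemma obs_prefix s1 s2 : obs_open h rho s1 <= obs_open h rho (s1 ++ s2).
Proof.
elim: s1 => [|x r IH] //.
case: r IH => [|y [|z r']] IH //=.
by rewrite leq_add2l.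
Qed.
End Obs.

From Stdlib Require Import Classical Lia.
From mathcomp Require Import zify.

Section Kernel.
Variables (V : finType) (R : V -> V -> Prop) (reach : rel V).
Hypotheses (refl : forall x, reach x x)
  (trans : forall x y z, reach x y -> reach y z -> reach x z)
  (Rr : forall x y, R x y -> reach x y)
  (rR : forall x y, x != y -> reach x y -> reach y x -> R x y).

Lemma kernel_gen n : forall U : {set V}, #|U| <= n -> exists S : {set V},
  [/\ S \subset U, (forall u v, u \in S -> v \in S -> u != v -> ~ R u v) &
      forall x, x \in U -> x \notin S -> exists2 v, v \in S & R x v].
Proof.
elim: n => [|n IH] U HU.
  exists set0; split; [exact: sub0set | by move=> u v; rewrite in_set0 | ].
  move=> x xU; move: HU; rewrite leqn0 => /eqP/cards0_eq U0.
  by rewrite U0 in_set0 in xU.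
case: (set_0Vmem U) => [U0 | [x0 x0U]].
  exists set0; split; [exact: sub0set | by move=> u v; rewrite in_set0 | ].
  by move=> x; rewrite U0 in_set0.
pose In x := [set y in U | reach y x].
case: (@arg_minnP _ x0 [pred x | x \in U] (fun x => #|In x|) x0U) => x xU xmin.
have {}xU : x \in U := xU.
pose X := In x.
have XE y : y \in X -> reach x y /\ reach y x.
  rewrite inE => /andP[yU ryx]; split => //.
  have sub : In y \subset X.
    apply/subsetP => w; rewrite !inE => /andP[wU rwy]; rewrite wU /=.
    exact: trans rwy ryx.
  have /eqP E : In y == X by rewrite eqEcard sub xmin.
  have : x \in In y by rewrite E inE xU refl.
  by rewrite inE => /andP[].
have xX : x \in X by rewrite inE xU refl.
set U' := U :\: X.
have HU' : #|U'| <= n.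
  rewrite -ltnS; apply: leq_trans HU; apply: proper_card; apply/properP; split.
    exact: subsetDl.
  by exists x => //; rewrite inE xX.
have [S' [S'U indep absorb]] := IH U' HU'.
have S'X s : s \in S' -> s \notin X.
  by move=> sS; move/subsetP: S'U => /(_ s sS); rewrite inE => /andP[].
have S'Uu s : s \in S' -> s \in U.
  by move=> sS; move/subsetP: S'U => /(_ s sS); rewrite inE => /andP[].
have XU y : y \in X -> y \in U by rewrite inE => /andP[].
case: (classic (exists2 z, z \in X & forall s, s \in S' -> ~ R z s)) => [[z zX zfree] | Hno].
  exists (z |: S'); split.
  - apply/subsetP => w; rewrite !inE => /orP[/eqP -> | wS]; [exact: XU | exact: S'Uu].
  - have back s : s \in S' -> ~ R s z.
      move=> sS Rsz; have := S'X s sS; rewrite inE S'Uu //=.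
      by rewrite (trans (Rr Rsz) (XE z zX).2).
    move=> u v; rewrite !inE => /orP[/eqP -> | uS] /orP[/eqP -> | vS] //.
    + by rewrite eqxx.
    + by move=> _; exact: zfree.
    + by move=> _; exact: back.
    + exact: indep.
  - move=> y yU; rewrite !inE negb_or => /andP[yz yS].
    case yX: (y \in X).
      exists z; first by rewrite !inE eqxx.
      have [rxy ryx] := XE y yX; have [rxz rzx] := XE z zX.
      by apply: rR => //; [exact: trans ryx rxz | exact: trans rzx rxy].
    have yU' : y \in U' by rewrite in_setD yX yU.
    have [v vS Ryv] := absorb y yU' yS.
    by exists v => //; rewrite !inE vS orbT.
exists S'; split.
- apply: subset_trans S'U _; exact: subsetDl.
- exact: indep.
- move=> y yU yS; case yX: (y \in X).
    apply: NNPP => Hn; apply: Hno; exists y => // s sS Rys; apply: Hn; by exists s.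
  by apply: absorb => //; rewrite in_setD yX yU.
Qed.
End Kernel.

Theorem theorem27 (V C : finType) (a : rel V) (h : rel C)
    (rho : V -> V -> C) (k : nat) :
  2 <= k ->
  irreflexive a ->
  local_in_tournament a ->
  (forall c : seq V, dcycle a c -> Hlen_closed h rho c <= k - 2) ->
  exists S : {set V}, kH_kernel a h rho k S.
Proof.
move=> k2 _ LT Hc.
pose R x y := x != y /\ exists p, dpath a x y p /\ Hlen_open h rho (x :: p) <= k - 1.
have Rr x y : R x y -> connect a x y.
  move=> [_ [p [/and3P[Pp /eqP Lp _] _]]]; apply/connectP; by exists p.
have rR x y : x != y -> connect a x y -> connect a y x -> R x y.
  move=> Nxy Cxy Cyx; split => //.
  case: (cyc_mutual LT Cxy Cyx) => [E|[s [Ds xs ys]]]; first by rewrite E eqxx in Nxy.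
  have [q [Pq Uq Mq]] := rot_first Ds xs.
  have yq : y \in q by move: ys; rewrite Mq in_cons eq_sym (negbTE Nxy).
  have [q1 [q2 Eq]] := mem_split yq.
  have Dq : dcycle a (x :: q) by rewrite /dcycle Uq /= Pq.
  have Hq := Hc _ Dq.
  exists (rcons q1 y); split.
  - rewrite /dpath last_rcons eqxx /=; apply/andP; split.
      by move: Pq; rewrite Eq rcons_cat /= -cat_rcons cat_path => /andP[].
    by move: Uq; rewrite Eq -cat_rcons -cat_cons cat_uniq => /andP[].
  - rewrite /Hlen_open.
    have : obs_open h rho (x :: rcons q1 y) <= k - 2.
      apply: leq_trans Hq; rewrite /Hlen_closed /=.
      apply: leq_trans (obs_suffix h rho (last x q) (x :: rcons q x)).
      have -> : x :: rcons q x = (x :: rcons q1 y) ++ rcons q2 x by rewrite Eq rcons_cat /= cat_rcons.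
      exact: obs_prefix.
    by move: k2; lia.
have [S [_ indep absorb]] := kernel_gen (connect0 a) (fun x y z => @connect_trans _ a y x z) Rr rR (leqnn #|[set: V]|).
exists S; split.
- move=> u v uS vS Nuv p Dp; rewrite leqNgt; apply/negP => Hlt.
  apply: (indep u v uS vS Nuv); split => //; exists p; split => //.
  by rewrite leq_subRL ?add1n // ltnW.
- move=> x xS; have [v vS [_ [p [Dp Hp]]]] := absorb x (in_setT x) xS.
  by exists v, p.
Qed.
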